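(* Let $\mathcal{X}\subseteq\mathbb{R}^d$ be closed and convex and $f:\mathcal{X}\to\mathbb{R}$ convex and continuously differentiable. Let $\alpha,\beta:\mathbb{R}\to\mathbb{R}$ be smooth with $0<\dot\beta_t\le e^{\alpha_t}$ for all $t$. Suppose $t\mapsto X_t\in\mathcal{X}$ is differentiable and $Z_t:=X_t+\dot\beta_t^{-1}\dot X_t$ satisfies $\langle\nabla f(X_t),x-Z_t\rangle\ge0$ for all $x\in\mathcal{X}$ and all $t$. Then for every $x\in\mathcal{X}$, the function $\mathcal{E}_t=e^{\beta_t}\big(f(X_t)-f(x)\big)$ is nonincreasing in $t$; in particular, if $x^\ast$ minimizes $f$ over $\mathcal{X}$, then $f(X_t)-f(x^\ast)\le e^{\beta_0-\beta_t}\big(f(X_0)-f(x^\ast)\big)$ for $t\ge0$. *)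

(* Defs.v *)
From HB Require Import structures.
From mathcomp Require Import all_boot all_order all_algebra.
From mathcomp Require Import all_classical all_reals all_analysis.
Set Implicit Arguments. Unset Strict Implicit. Unset Printing Implicit Defensive.
Import Order.TTheory GRing.Theory Num.Theory.
Import numFieldNormedType.Exports.
Local Open Scope classical_set_scope.
Local Open Scope ring_scope.

Definition dotv (R : realType) (d : nat) (u v : 'rV[R]_d) : R :=
  \sum_(i < d) u ord0 i * v ord0 i.

Definition grad (R : realType) (d : nat) (f : 'rV[R]_d -> R) (x : 'rV[R]_d)
  : 'rV[R]_d := \row_(i < d) ('D_(delta_mx ord0 i) f x).

Definition convex_fun_on (R : realType) (d : nat) (X : set 'rV[R]_d)
  (f : 'rV[R]_d -> R) : Prop :=
  forall x y, X x -> X y -> forall l : R, 0 <= l -> l <= 1 ->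
    f (l *: x + (1 - l) *: y) <= l * f x + (1 - l) * f y.

Definition smooth_fun (R : realType) (g : R -> R) : Prop :=
  forall (n : nat) (t : R), derivable (derive1n n g) t 1.

(* Main.v *)
Require Import Defs.
From HB Require Import structures.
From mathcomp Require Import all_boot all_order all_algebra.
From mathcomp Require Import all_classical all_reals all_analysis.
From mathcomp Require Import lra.
Import Order.TTheory GRing.Theory Num.Theory.
Import numFieldNormedType.Exports.
Local Open Scope classical_set_scope.
Local Open Scope ring_scope.

Section Helpers.
Variables (R : realType) (d : nat).

Lemma diff_dotv (f : 'rV[R]_d -> R) (y v : 'rV[R]_d) :
  differentiable f y -> 'd f y v = dotv (grad f y) v.
Proof.
move=> df.
rewrite [in LHS](matrix_sum_delta v) big_ord1 linear_sum /dotv.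
apply: eq_bigr => i _.
by rewrite linearZ /= /grad mxE (deriveE _ df) mulrC.
Qed.

Lemma dcomp_dotv (f : 'rV[R]_d -> R) (Xt : R -> 'rV[R]_d) t :
  differentiable f (Xt t) -> derivable Xt t 1 ->
  is_derive t 1 (f \o Xt) (dotv (grad f (Xt t)) (derive1 Xt t)).
Proof.
move=> df dX.
have dX' := dX; move/derivable1_diffP: dX' => dX'.
have dc : differentiable (f \o Xt) t by apply: differentiable_comp.
have -> : dotv (grad f (Xt t)) (derive1 Xt t) = 'D_1 (f \o Xt) t.
  by rewrite (deriveE _ dc) diff_comp //= (derive1E' dX') diff_dotv.
apply: derivableP; exact/derivable1_diffP.
Qed.

Lemma conv_grad (X : set 'rV[R]_d) f x y : convex_fun_on X f -> X x -> X y ->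
  differentiable f y -> 'D_(x - y) f y <= f x - f y.
Proof.
move=> cf Xx Xy df.
have dv : derivable f y (x - y) by exact: diff_derivable.
rewrite /derive cvg_at_rightE; last by apply: dv.
apply: limr_le.
  apply/cvg_ex; exists ('D_(x - y) f y).
  by apply: cvg_dnbhs_at_right; exact: dv.
near=> h.
have hp : 0 < h by near: h; exact: nbhs_right_gt.
have h1 : h <= 1 by near: h; exact: nbhs_right_le.
rewrite /= -ler_pdivlMl //.
have -> : h *: (x - y) + y = h *: x + (1 - h) *: y.
  by rewrite scalerBr scalerBl scale1r -addrA [- _ + y]addrC.
rewrite invrK.
have := cf x y Xx Xy h (ltW hp) h1.
move=> H; apply: (le_trans (lerB H (lexx _))).
rewrite mulrBr mulrBl mul1r; lra.
rewrite invr_gt0 //.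
Unshelve. all: by end_near.
Qed.

Lemma dotvD (g u v : 'rV[R]_d) : dotv g (u + v) = dotv g u + dotv g v.
Proof. by rewrite /dotv -big_split; apply: eq_bigr => i _; rewrite mxE mulrDr. Qed.

Lemma dotvN (g u : 'rV[R]_d) : dotv g (- u) = - dotv g u.
Proof. by rewrite /dotv -sumrN; apply: eq_bigr => i _; rewrite mxE mulrN. Qed.

Lemma dotvZ (g u : 'rV[R]_d) c : dotv g (c *: u) = c * dotv g u.
Proof. by rewrite /dotv mulr_sumr; apply: eq_bigr => i _; rewrite mxE mulrCA. Qed.

End Helpers.

Theorem proposition9 (R : realType) (d : nat) (X : set 'rV[R]_d)
  (f : 'rV[R]_d -> R) (alpha beta : R -> R) (Xt : R -> 'rV[R]_d)
  (hXclosed : closed X) (hXconv : convex.convex_set X)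
  (hfconv : convex_fun_on X f)
  (hfdiff : forall x, X x -> differentiable f x)
  (hfC1 : {within X, continuous (grad f)})
  (halpha : smooth_fun alpha) (hbeta : smooth_fun beta)
  (hbeta_pos : forall t, 0 < derive1 beta t)
  (hbeta_le : forall t, derive1 beta t <= expR (alpha t))
  (hXin : forall t, X (Xt t))
  (hXdiff : forall t, derivable Xt t 1)
  (hZ : forall t x, X x ->
     0 <= dotv (grad f (Xt t))
                (x - (Xt t + (derive1 beta t)^-1 *: derive1 Xt t))) :
  (forall x, X x ->
     forall s t, s <= t ->
       expR (beta t) * (f (Xt t) - f x) <= expR (beta s) * (f (Xt s) - f x))
  /\
  (forall xstar, X xstar -> (forall x, X x -> f xstar <= f x) ->
     forall t, 0 <= t ->
       f (Xt t) - f xstar <= expR (beta 0 - beta t) * (f (Xt 0) - f xstar)).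
Proof.
have part1 : forall x, X x ->
     forall s t, s <= t ->
       expR (beta t) * (f (Xt t) - f x) <= expR (beta s) * (f (Xt s) - f x).
  move=> x Xx.
  pose E := fun t => expR (beta t) * (f (Xt t) - f x).
  have dE : forall t : R, is_derive t 1 E
     (expR (beta t) * (dotv (grad f (Xt t)) (derive1 Xt t) - 0) +
      (f (Xt t) - f x) * (expR (beta t) * derive1 beta t)).
    move=> t.
    have db : derivable beta t 1 by exact: (hbeta 0%N t).
    have hb : is_derive t 1 beta (derive1 beta t).
      by rewrite derive1E; exact: derivableP.
    have hc : is_derive t 1 (expR \o beta) (expR (beta t) * derive1 beta t).
      exact: is_derive1_comp.
    have hg : is_derive t 1 (f \o Xt - cst (f x))
        (dotv (grad f (Xt t)) (derive1 Xt t) - 0).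
      have h1 := @dcomp_dotv R d f Xt t (hfdiff _ (hXin t)) (hXdiff t).
      exact: (is_deriveB h1 (is_derive_cst (f x) t 1)).
    have -> : E = (expR \o beta) * (f \o Xt - cst (f x)) by apply/funext.
    apply: is_derive_eq.
    by rewrite /= /GRing.scale /= mulrC.
  have nE : forall t, derive1 E t <= 0.
    move=> t; have := dE t => dEt; rewrite derive1E derive_val.
    set y := Xt t; set G := grad f y; set D := dotv G (derive1 Xt t).
    set b := derive1 beta t.
    have bp : 0 < b := hbeta_pos t.
    have HZ := hZ t x Xx.
    rewrite -/y -/G -/b opprD addrA dotvD dotvN dotvZ -/D in HZ.
    have Hc : dotv G (x - y) <= f x - f y.
      rewrite /G -diff_dotv; last exact: hfdiff (hXin t).
      rewrite -deriveE; last exact: hfdiff (hXin t).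
      exact: (@conv_grad R d X f x y hfconv Xx (hXin t) (hfdiff _ (hXin t))).
    have HD : D / b <= f x - f y.
      rewrite mulrC; lra.
    rewrite ler_pdivrMr // in HD.
    rewrite subr0 mulrCA -mulrDr pmulr_rle0 ?expR_gt0 //.
    nra.
  move=> s t st.
  have := @ler0_derive1_nincr R E s t _ _ _ s t (lexx s) st (lexx t); apply.
  - by move=> z _; by case: (dE z).
  - by move=> z _; exact: nE.
  - apply: derivable_within_continuous => z _; by case: (dE z).
split => //.
move=> xs Xs _ t t0.
have := part1 xs Xs 0 t t0.
rewrite expRD expRN mulrAC ler_pdivlMr ?expR_gt0 // => H.
by rewrite mulrC.
Qed.
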